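(* Let $T$ be a spanning tree of $K_n$. For each edge $e$ of $T$, let $A_e$ be the event that $e$ is an edge of a spanning tree of $K_n$ drawn uniformly at random. Then the line graph $\mathcal{L}(T)$ is a negative dependency graph for the events $\{A_e\}_{e \in T}$.
   Context: Given events $A_1,\dots,A_N$, a negative dependency graph is a simple graph $G=([N],E)$ such that for all $i\in[N]$ and all $S\subseteq\{j\in[N] : \{i,j\}\notin E\}$, if $\Pr[\bigwedge_{j\in S}\bar A_j]\neq 0$ then $\Pr[A_i \mid \bigwedge_{j\in S}\bar A_j]\le \Pr[A_i]$ (here the events are indexed by the edges of $T$). The line graph $\mathcal{L}(T)$ has vertex set the edges of $T$, two edges adjacent if they share an endpoint. *)

(* Defs.v *)
From mathcomp Require Import all_boot all_order all_algebra.
Set Implicit Arguments. Unset Strict Implicit. Unset Printing Implicit Defensive.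
Import Order.TTheory GRing.Theory Num.Theory.
Local Open Scope ring_scope.

(* Vertices of K_n are 'I_n; an edge of K_n is a 2-element subset of 'I_n.
   A subgraph of K_n on all n vertices is given by its edge set. *)
Definition edge_of_Kn (n : nat) (e : {set 'I_n}) : bool := #|e| == 2%N.

Definition adj_of (n : nat) (t : {set {set 'I_n}}) : rel 'I_n :=
  fun x y => [set x; y] \in t.

Definition connected_spanning (n : nat) (t : {set {set 'I_n}}) : bool :=
  [forall u : 'I_n, forall v : 'I_n, connect (adj_of t) u v].

(* acyclic: no edge lies on a cycle, i.e. for every edge {u,v} of t, u and v
   are not connected in t with that edge removed *)
Definition acyclic (n : nat) (t : {set {set 'I_n}}) : bool :=
  [forall u : 'I_n, forall v : 'I_n, ([set u; v] \in t) && (u != v) ==>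
    ~~ connect (adj_of (t :\ [set u; v])) u v].

Definition spanning_tree (n : nat) (t : {set {set 'I_n}}) : bool :=
  [&& [forall e in t, edge_of_Kn e], connected_spanning t & acyclic t].

Definition spanning_trees (n : nat) : {set {set {set 'I_n}}} :=
  [set t | spanning_tree t].

Definition Pr (Om : finType) (S : {set Om}) (E : {set Om}) : rat :=
  (#|E :&: S|)%:R / (#|S|)%:R.

Definition negative_dependency_graph (Om I : finType) (S : {set Om})
    (D : {set I}) (adj : rel I) (A : I -> {set Om}) : Prop :=
  forall i, i \in D ->
  forall Sj : {set I}, Sj \subset [set j in D | ~~ adj i j] ->
    let B := \bigcap_(j in Sj) ~: A j in
    Pr S B != 0 ->
    Pr S (A i :&: B) / Pr S B <= Pr S (A i).

Definition edge_event (n : nat) (e : {set 'I_n}) : {set {set {set 'I_n}}} :=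
  [set t : {set {set 'I_n}} | e \in t].

Definition line_adj (n : nat) : rel {set 'I_n} :=
  fun e f => (e != f) && (e :&: f != set0).

(* Main.v *)
Require Import Defs.
From mathcomp Require Import all_boot all_order all_algebra.
From mathcomp Require Import zify.
Import GRing.Theory Num.Theory.
Set Implicit Arguments. Unset Strict Implicit. Unset Printing Implicit Defensive.

Section Trees.
Variable n : nat.
Implicit Types (t s : {set {set 'I_n}}) (f g e : {set 'I_n}) (x y z a b c u v w : 'I_n).

Lemma adj_sym s : symmetric (adj_of s).
Proof. by move=> x y; rewrite /adj_of setUC. Qed.

Lemma conn_sym s x y : connect (adj_of s) x y = connect (adj_of s) y x.
Proof. exact: (sym_connect_sym (adj_sym s)). Qed.

Lemma conn_mono s s' x y : s \subset s' ->
  connect (adj_of s) x y -> connect (adj_of s') x y.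
Proof.
move=> sub; apply: connect_sub => p q H; apply: connect1.
exact: (subsetP sub).
Qed.

Lemma conn_edge s x y : [set x; y] \in s -> connect (adj_of s) x y.
Proof. by move=> H; apply: connect1. Qed.

Lemma set2_eqE a b x y : [set x; y] = [set a; b] ->
  (x = a /\ y = b) \/ (x = b /\ y = a).
Proof.
move=> H.
have hx : x \in [set a; b] by rewrite -H set21.
have hy : y \in [set a; b] by rewrite -H set22.
have ha : a \in [set x; y] by rewrite H set21.
have hb : b \in [set x; y] by rewrite H set22.
case/set2P: hx => ex; case/set2P: hy => ey; subst x y.
- by left; move: hb => /set2P [] ->.
- by left.
- by right.
- by left; move: ha => /set2P [] ->.
Qed.

Lemma conn_split s a b x y : connect (adj_of s) x y ->
  [\/ connect (adj_of (s :\ [set a; b])) x y,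
      connect (adj_of (s :\ [set a; b])) x a /\ connect (adj_of (s :\ [set a; b])) b y |
      connect (adj_of (s :\ [set a; b])) x b /\ connect (adj_of (s :\ [set a; b])) a y].
Proof.
set r := adj_of (s :\ [set a; b]).
move/connectP=> [p pth ->]; elim: p x pth => [|z p IH] x /=.
  by move=> _; apply: Or31; exact: connect0.
case/andP=> hxz pz; have := IH z pz.
case: (boolP ([set x; z] == [set a; b])) => [/eqP/set2_eqE [[-> ->]|[-> ->]] | neq].
- case=> [H|[_ H]|[_ H]].
  + by apply: Or32; split => //; exact: connect0.
  + by apply: Or32; split => //; exact: connect0.
  + by apply: Or31.
- case=> [H|[_ H]|[H1 H2]].
  + by apply: Or33; split => //; exact: connect0.
  + by apply: Or31.
  + by apply: Or33.
- have xz : connect r x z by apply: connect1; rewrite /r /adj_of !inE neq.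
  case=> [H|[H1 H2]|[H1 H2]].
  + by apply: Or31; exact: connect_trans xz H.
  + by apply: Or32; split => //; exact: connect_trans xz H1.
  + by apply: Or33; split => //; exact: connect_trans xz H1.
Qed.

Lemma acycP t x y : acyclic t -> [set x; y] \in t -> x != y ->
  ~~ connect (adj_of (t :\ [set x; y])) x y.
Proof.
move=> /forallP/(_ x)/forallP/(_ y)/implyP H h1 h2; apply: H; by rewrite h1 h2.
Qed.

Lemma connP t : connected_spanning t -> forall x y, connect (adj_of t) x y.
Proof. by move=> /forallP H x y; move: (H x) => /forallP. Qed.

Definition sep s g := [exists x in g, exists y in g, ~~ connect (adj_of s) x y].

Lemma sepE s x y : sep s [set x; y] = ~~ connect (adj_of s) x y.
Proof.
apply/idP/idP.
  case/exists_inP=> p /set2P hp /exists_inP [q /set2P hq].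
  case: hp => ->; case: hq => -> //; rewrite ?connect0 //.
  by rewrite conn_sym.
by move=> H; apply/exists_inP; exists x; rewrite ?set21 //; apply/exists_inP; exists y; rewrite ?set22.
Qed.

Lemma edge2 f x : edge_of_Kn f -> x \in f -> exists c, f = [set x; c] /\ x != c.
Proof.
case/cards2P=> p [q [pq ->]] /set2P [->|->]; first by exists q.
by exists p; rewrite setUC eq_sym.
Qed.

Lemma sep_self t a b : spanning_tree t -> [set a; b] \in t -> a != b ->
  sep (t :\ [set a; b]) [set a; b].
Proof. by case/and3P=> _ _ ac H1 H2; rewrite sepE; apply: acycP. Qed.


Lemma sep_edge_exists t u v : spanning_tree t -> u != v ->
  exists a, [/\ [set u; a] \in t, u != a & ~~ connect (adj_of (t :\ [set u; a])) u v].
Proof.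
case/and3P=> _ cs ac uv.
have := connP cs u v; move/connectP=> [p pth vE].
move: uv; rewrite vE; case/shortenP: pth => p' pth' uq _.
case: p' pth' uq => [|a q] /=; first by rewrite eqxx.
case/andP=> hua pq /andP [unin uqq] uv.
have ua : u != a by apply: contraNneq unin => ->; rewrite inE eqxx.
exists a; split => //.
have av : connect (adj_of (t :\ [set u; a])) a (last a q).
  apply/connectP; exists q => //.
  apply: (sub_in_path (P := [pred z | z != u]) (e := adj_of t)).
  - move=> x y hx hy; rewrite /adj_of !inE => ->; rewrite andbT.
    apply: contraNneq hx => E.
    have : u \in [set x; y] by rewrite E set21.
    case/set2P => [->|uy] //; by move: hy; rewrite inE uy eqxx.
  - apply/allP => z zin /=; apply: contraNneq unin => zu; by rewrite -zu.
  - exact: pq.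
apply/negP => H; have := acycP ac hua ua; rewrite (connect_trans H) //.
by rewrite conn_sym.
Qed.

Lemma sep_edge_uniq t u v a b : spanning_tree t -> [set u; a] \in t ->
  [set u; b] \in t -> u != a -> u != b ->
  ~~ connect (adj_of (t :\ [set u; a])) u v ->
  ~~ connect (adj_of (t :\ [set u; b])) u v -> a = b.
Proof.
case/and3P=> _ cs ac ha hb ua ub na nb.
apply/eqP/negPn/negP => ab.
have ubs : [set u; b] \in t :\ [set u; a].
  rewrite !inE hb andbT; apply/negP => /eqP E.
  have : b \in [set u; a] by rewrite -E set22.
  by case/set2P => [E'|E']; [move: ub; rewrite E' eqxx | move: ab; rewrite E' eqxx].
have av : connect (adj_of (t :\ [set u; a])) a v.
  by case: (conn_split u a (connP cs u v)) => [H|[_ H]|[_ H]] //;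
     [move: na; rewrite H | move: na; rewrite H].
have sub1 : (t :\ [set u; a]) :\ [set u; b] \subset t :\ [set u; b].
  by apply/subsetP => k; rewrite !inE => /and3P [-> _ ->].
have sub2 : (t :\ [set u; a]) :\ [set u; b] \subset t :\ [set u; a].
  by apply/subsetP => k; rewrite !inE => /and3P [_ -> ->].
case: (conn_split u b av) => [H|[H _]|[_ H]].
- move: nb; rewrite (connect_trans _ (conn_mono sub1 H)) //.
  by apply: conn_edge; rewrite !inE ha andbT; apply/negP => /eqP E;
     move: ubs; rewrite !inE E eqxx.
- by have := acycP ac ha ua; rewrite conn_sym (conn_mono sub2 H).
- by move: na; rewrite (conn_mono sub2 H).
Qed.


Lemma swap_tree t f g : spanning_tree t -> f \in t -> edge_of_Kn g -> g \notin t ->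
  sep (t :\ f) g -> spanning_tree (t :\ f :|: [set g]).
Proof.
move=> st ft eg gt sp; have st0 := st; case/and3P: st0 => /forall_inP ed cs ac.
have [a [b [ab fE]]] : exists a b, a != b /\ f = [set a; b] by apply/cards2P; exact: ed.
have [x [y [xy gE]]] : exists x y, x != y /\ g = [set x; y] by apply/cards2P.
subst f g; set t' := t :\ [set a; b] :|: [set [set x; y]].
have sub : t :\ [set a; b] \subset t' by apply/subsetP=> k kin; rewrite !inE; rewrite !inE in kin; rewrite kin.
have gin : [set x; y] \in t' by rewrite !inE eqxx orbT.
rewrite sepE in sp.
have comp z : connect (adj_of (t :\ [set a; b])) a z || connect (adj_of (t :\ [set a; b])) b z.
  by case: (conn_split a b (connP cs a z)) => [->|[_ ->]|[_ ->]]; rewrite ?orbT.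
have ab' : connect (adj_of t') a b.
  case/orP: (comp x) => hx; case/orP: (comp y) => hy.
  - by move: sp; rewrite (connect_trans _ hy) // conn_sym.
  - apply: connect_trans (conn_mono sub hx) _; apply: connect_trans (conn_edge gin) _.
    by rewrite conn_sym; apply: conn_mono sub hy.
  - apply: connect_trans (conn_mono sub hy) _.
    have gin' : [set y; x] \in t' by rewrite setUC.
    apply: connect_trans (conn_edge gin') _.
    by rewrite conn_sym; apply: conn_mono sub hx.
  - by move: sp; rewrite (connect_trans _ hy) // conn_sym.
have az z : connect (adj_of t') a z.
  case/orP: (comp z) => hz; first exact: conn_mono sub hz.
  exact: connect_trans ab' (conn_mono sub hz).
apply/and3P; split.
- apply/forall_inP => k; rewrite !inE => /orP [/andP [_ kt]|/eqP ->] //; exact: ed.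
- apply/forallP => p; apply/forallP => q; apply: connect_trans (az q).
  by rewrite conn_sym.
apply/forallP => p; apply/forallP => q; apply/implyP => /andP [hpq pq].
move: (hpq); rewrite !inE => /orP [/andP [hf ht] | /eqP hg].
- apply/negP => C.
  have sub1 : (t' :\ [set p; q]) :\ [set x; y] \subset t :\ [set p; q].
    apply/subsetP => k; rewrite !inE => /and3P [kg -> /=].
    by case/orP => [/andP [_ ->] //|kg']; rewrite kg' in kg.
  have sub2 : (t' :\ [set p; q]) :\ [set x; y] \subset t :\ [set a; b].
    apply/subsetP => k; rewrite !inE => /and3P [kg _].
    by case/orP => [/andP [-> ->] //|kg']; rewrite kg' in kg.
  have hs : [set p; q] \in t :\ [set a; b] by rewrite !inE hf ht.
  case: (conn_split x y C) => [H|[H1 H2]|[H1 H2]].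
  + by have := acycP ac ht pq; rewrite (conn_mono sub1 H).
  + suff : connect (adj_of (t :\ [set a; b])) x y by rewrite (negbTE sp).
    rewrite conn_sym in H1; rewrite conn_sym in H2.
    apply: connect_trans (conn_mono sub2 H1) _; apply: connect_trans _ (conn_mono sub2 H2).
    exact: conn_edge.
  + suff : connect (adj_of (t :\ [set a; b])) x y by rewrite (negbTE sp).
    apply: connect_trans (conn_mono sub2 H2) _; apply: connect_trans _ (conn_mono sub2 H1).
    by rewrite conn_sym; apply: conn_edge.
- have E : t' :\ [set p; q] = t :\ [set a; b].
    apply/setP => k; rewrite !inE hg; case: (boolP (k == [set x; y])) => [/eqP ->|] //=.
    by rewrite (negbTE gt) !andbF.
    by move=> kn; rewrite orbF.
  rewrite E; case: (set2_eqE hg) => [[-> ->]|[-> ->]] //.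
  by rewrite conn_sym.
Qed.

End Trees.

Lemma card_pairs (T1 T2 : finType) (P : pred T1) (Q : T1 -> pred T2) :
  #|[set p : T1 * T2 | P p.1 && Q p.1 p.2]| = \sum_(x | P x) #|[set y | Q x y]|.
Proof.
rewrite -sum1_card (eq_bigl (fun p => P p.1 && Q p.1 p.2)); last by move=> p; rewrite inE.
rewrite -(@pair_big_dep _ _ _ _ _ P Q (fun _ _ => 1%N)) /=; apply: eq_bigr => x _.
by rewrite -sum1_card; apply: eq_bigl => y; rewrite inE.
Qed.

Lemma recover (n : nat) (t : {set {set 'I_n}}) (f g : {set 'I_n}) : g \notin t -> f \in t ->
  (t :\ f :|: [set g]) :\ g :|: [set f] = t.
Proof.
move=> gt ft; apply/setP => k; rewrite !inE.
case: (boolP (k == f)) => [/eqP ->|kf] /=; first by rewrite orbT ft.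
case: (boolP (k == g)) => [/eqP ->|kg] /=; first by rewrite (negbTE gt).
by rewrite !orbF.
Qed.

Lemma rm_add (n : nat) (s : {set {set 'I_n}}) (g : {set 'I_n}) : g \notin s -> (s :|: [set g]) :\ g = s.
Proof.
move=> gs; apply/setP => k; rewrite !inE.
case: (boolP (k == g)) => [/eqP ->|kg] /=; first by rewrite (negbTE gs).
by rewrite orbF.
Qed.

Section Count.
Variables (n : nat) (u v : 'I_n) (F : {set {set 'I_n}}).
Hypothesis uv : u != v.
Hypothesis hF : forall j, j \in F -> (u \notin j) && (v \notin j).

Definition Xs := [set t : {set {set 'I_n}} | spanning_tree t && [forall j in F, j \notin t]].
Definition Is := [set f : {set 'I_n} | edge_of_Kn f && ((u \in f) (+) (v \in f))].
Definition Ys := Xs :\: edge_event [set u; v].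
Definition Zs := Xs :&: edge_event [set u; v].
Definition PY := [set p : {set {set 'I_n}} * {set 'I_n} | (p.1 \in Ys) &&
   ((p.2 \in Is) && (p.2 \in p.1) && sep (p.1 :\ p.2) [set u; v])].
Definition PZ := [set p : {set {set 'I_n}} * {set 'I_n} | (p.1 \in Zs) &&
   ((p.2 \in Is) && sep (p.1 :\ [set u; v]) p.2)].

Lemma e_edge : edge_of_Kn [set u; v].
Proof. by rewrite /edge_of_Kn cards2 uv. Qed.

Lemma e_notI : [set u; v] \notin Is.
Proof. by rewrite inE !inE !eqxx orbT andbF. Qed.

Lemma inXs (t : {set {set 'I_n}}) : (t \in Xs) = spanning_tree t && [forall j in F, j \notin t].
Proof. by rewrite inE. Qed.

Lemma I_F (f j : {set 'I_n}) : f \in Is -> j \in F -> f != j.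
Proof.
rewrite inE => /andP [_ xo] /hF /andP [uj vj]; apply/eqP => E; subst f.
by move: xo; rewrite (negbTE uj) (negbTE vj).
Qed.

Lemma I_edge (f : {set 'I_n}) : f \in Is -> edge_of_Kn f.
Proof. by rewrite inE => /andP []. Qed.

Lemma sep_self' (t : {set {set 'I_n}}) (f : {set 'I_n}) : spanning_tree t -> f \in t -> edge_of_Kn f -> sep (t :\ f) f.
Proof.
move=> st ft /cards2P [a [b [ab fE]]]; subst f; exact: sep_self.
Qed.

Lemma inYs t : (t \in Ys) = (t \in Xs) && ([set u; v] \notin t).
Proof. by rewrite /Ys in_setD andbC; congr (_ && ~~ _); rewrite inE. Qed.

Lemma inZs t : (t \in Zs) = (t \in Xs) && ([set u; v] \in t).
Proof. by rewrite /Zs in_setI; congr (_ && _); rewrite inE. Qed.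

Lemma inPY p : (p \in PY) = [&& p.1 \in Xs, [set u; v] \notin p.1, p.2 \in Is,
   p.2 \in p.1 & sep (p.1 :\ p.2) [set u; v]].
Proof. by rewrite /PY inE inYs -!andbA. Qed.

Lemma inPZ p : (p \in PZ) = [&& p.1 \in Xs, [set u; v] \in p.1, p.2 \in Is
   & sep (p.1 :\ [set u; v]) p.2].
Proof. by rewrite /PZ inE inZs -!andbA. Qed.

Lemma PY_PZ : #|PY| = #|PZ|.
Proof.
pose phi (p : {set {set 'I_n}} * {set 'I_n}) := (p.1 :\ p.2 :|: [set [set u; v]], p.2).
have inj : {in PY &, injective phi}.
  move=> [t f] [t' f'] /=; rewrite !inPY /=.
  move=> /and5P [_ et _ ft _] /and5P [_ et' _ ft' _] [E Ef]; subst f'.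
  by rewrite -(recover et ft) -(recover et' ft') E.
rewrite -(card_in_imset inj); congr (#|pred_of_set _|).
apply/setP => [[t' f]]; apply/imsetP/idP.
- case=> [[t f0]]; rewrite inPY /= => /and5P [tX et fI ft sp].
  case=> -> ->; rewrite inPZ /=.
  have eft : [set u; v] \notin t :\ f0 by rewrite inE (negbTE et) andbF.
  move: tX; rewrite inXs => /andP [st av].
  apply/and4P; split => //.
  + rewrite inXs (swap_tree st ft e_edge et sp) /=.
    apply/forall_inP => j jF; rewrite !inE negb_or; apply/andP; split.
      by rewrite negb_and (forall_inP av j jF) orbT.
    by apply: contraTneq jF => ->; apply/negP => /hF; rewrite !inE eqxx.
  + by rewrite !inE eqxx orbT.
  + by rewrite rm_add // sep_self' ?(I_edge fI).
- rewrite inPZ /= => /and4P [tX et fI sp].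
  move: tX; rewrite inXs => /andP [st av].
  have ft : f \notin t'.
    apply/negP => ft; have := I_edge fI; case/cards2P => [a [b [ab fE]]]; subst f.
    move: sp; rewrite sepE conn_edge //; rewrite !inE ft andbT.
    by apply: contraNneq e_notI => <-.
  exists (t' :\ [set u; v] :|: [set f], f); last by rewrite /phi /= recover.
  have fnt : f \notin t' :\ [set u; v] by rewrite inE (negbTE ft) andbF.
  rewrite inPY /=; apply/and5P; split => //.
  + rewrite inXs (swap_tree st et (I_edge fI) ft sp) /=.
    apply/forall_inP => j jF; rewrite !inE negb_or; apply/andP; split.
      by rewrite negb_and (forall_inP av j jF) orbT.
    by rewrite eq_sym (I_F fI jF).
  + rewrite !inE negb_or eqxx /=; apply: contraNneq e_notI => E; by rewrite E.
  + by rewrite !inE eqxx orbT.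
  + by rewrite rm_add // sep_self' ?e_edge.
Qed.

Lemma cardY t : t \in Ys ->
  #|[set f | (f \in Is) && (f \in t) && sep (t :\ f) [set u; v]]| = 2.
Proof.
rewrite inYs inXs => /andP [/andP [st _] et].
have vu : v != u by rewrite eq_sym.
have [a [ha ua na]] := sep_edge_exists st uv.
have [b [hb vb nb]] := sep_edge_exists st vu.
have av : a != v by apply: contraNneq et => E; rewrite -E.
have bu : b != u by apply: contraNneq et => E; rewrite setUC -E.
have -> : [set f | (f \in Is) && (f \in t) && sep (t :\ f) [set u; v]] =
          [set [set u; a]; [set v; b]].
  apply/setP => f; rewrite !inE.
  apply/idP/idP.
  - case/andP => [/andP [/andP [ef fI] ft] sp]; move: fI.
    case: (boolP (u \in f)) => uf /= vf.
    + have [c [fE uc]] := edge2 ef uf; subst f.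
      rewrite sepE in sp.
      by rewrite (sep_edge_uniq st ha ft ua uc na sp) eqxx.
    + have [c [fE vc]] := edge2 ef vf; subst f.
      rewrite sepE conn_sym in sp.
      by rewrite (sep_edge_uniq st hb ft vb vc nb sp) eqxx orbT.
  - case/orP => /eqP ->.
    + rewrite ha sepE na andbT /edge_of_Kn cards2 ua /= !inE eqxx /=.
      by rewrite negb_or eq_sym uv eq_sym av.
    + rewrite hb sepE conn_sym nb andbT /edge_of_Kn cards2 vb /= !inE eqxx /=.
      by rewrite (negbTE uv) (eq_sym u b) (negbTE bu).
rewrite cards2; suff -> : [set u; a] != [set v; b] by []; apply/eqP => E.
have : u \in [set v; b] by rewrite -E set21.
by rewrite !inE (negbTE uv) eq_sym (negbTE bu).
Qed.

Lemma cardZ t : t \in Zs ->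
  #|[set f | (f \in Is) && sep (t :\ [set u; v]) f]| = (n - 2)%N.
Proof.
rewrite inZs inXs => /andP [/andP [st _] et].
have ac : acyclic t by case/and3P: st.
have cs : connected_spanning t by case/and3P: st.
set s := t :\ [set u; v].
pose m w := if connect (adj_of s) u w then [set v; w] else [set u; w].
pose W := [set w | (w != u) && (w != v)].
have cW : #|W| = (n - 2)%N.
  have -> : W = ~: [set u; v] by apply/setP => w; rewrite !inE negb_or.
  have := cardsC [set u; v]; rewrite cards2 uv card_ord => H; lia.
have inj : {in W &, injective m}.
  move=> w1 w2; rewrite !inE => /andP [w1u w1v] /andP [w2u w2v] E.
  have : w1 \in m w2 by rewrite -E /m; case: ifP => _; rewrite set22.
  by rewrite /m; case: ifP => _; rewrite !inE ?(negbTE w1u) ?(negbTE w1v) => /eqP.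
have nuv : ~~ connect (adj_of s) u v by apply: acycP.
rewrite -cW -(card_in_imset inj); congr (#|pred_of_set _|).
apply/setP => f; apply/idP/imsetP.
- rewrite inE => /andP [fI sp]; have ef := I_edge fI.
  move: fI; rewrite inE ef /=.
  case: (boolP (u \in f)) => uf /=.
  + move=> nvf; have [c [fE uc]] := edge2 ef uf; subst f.
    have cv : c != v by apply: contraNneq nvf => <-; rewrite set22.
    rewrite sepE in sp.
    exists c; first by rewrite inE eq_sym uc cv.
    by rewrite /m (negbTE sp).
  + move=> vf; have [c [fE vc]] := edge2 ef vf; subst f.
    have cu : c != u by apply: contraNneq uf => <-; rewrite set22.
    rewrite sepE in sp.
    exists c; first by rewrite inE cu eq_sym vc.
    rewrite /m; case: ifP => // nuc.
    case: (conn_split u v (connP cs u c)) => [H|[_ H]|[_ H]].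
    * by move: nuc; rewrite H.
    * by move: sp; rewrite H.
    * by move: nuc; rewrite H.
- case=> w wW ->; move: wW; rewrite /W inE => /andP [wu wv].
  rewrite inE /m; case: ifP => cuw.
  + have vw : v != w by rewrite eq_sym.
    have uw : u != w by rewrite eq_sym.
    rewrite inE /edge_of_Kn cards2 vw /= !inE eqxx (negbTE uv) (negbTE uw) /= sepE.
    apply: contra nuv => H; apply: connect_trans cuw _; by rewrite conn_sym.
  + have uw : u != w by rewrite eq_sym.
    rewrite inE /edge_of_Kn cards2 uw /= !inE eqxx (eq_sym v u) (negbTE uv) (eq_sym v w) (negbTE wv) /= sepE.
    by rewrite cuw.
Qed.

Lemma key : (n * #|Zs| = 2 * #|Xs|)%N.
Proof.
have n2 : (1 < n)%N.
  have := ltn_ord u; have := ltn_ord v; move: uv.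
  rewrite -(inj_eq val_inj) /= => ab hu hv; lia.
have hPY : #|PY| = (#|Ys| * 2)%N.
  rewrite /PY (card_pairs (fun t => t \in Ys)
     (fun t f => (f \in Is) && (f \in t) && sep (t :\ f) [set u; v])) -sum_nat_const.
  by apply: eq_bigr => t tY; apply: cardY.
have hPZ : #|PZ| = (#|Zs| * (n - 2))%N.
  rewrite /PZ (card_pairs (fun t => t \in Zs)
     (fun t f => (f \in Is) && sep (t :\ [set u; v]) f)) -sum_nat_const.
  by apply: eq_bigr => t tZ; apply: cardZ.
have hX : (#|Zs| + #|Ys| = #|Xs|)%N by rewrite /Zs /Ys cardsID.
have := PY_PZ; rewrite hPY hPZ -hX => E.
have H : (n * #|Zs| = (n - 2) * #|Zs| + 2 * #|Zs|)%N by rewrite -mulnDl subnK.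
rewrite H (mulnC (n - 2)) -E; lia.
Qed.

End Count.

Local Open Scope ring_scope.

Theorem corollary3p4 (n : nat) (T : {set {set 'I_n}}) :
  spanning_tree T ->
  negative_dependency_graph (spanning_trees n) T (@line_adj n) (@edge_event n).
Proof.
move=> sT i iT Sj sub /=.
set B := \bigcap_(j in Sj) ~: edge_event j.
move=> PB.
have [u [v [uv iE]]] : exists u v, u != v /\ i = [set u; v].
  apply/cards2P; case/and3P: sT => /forall_inP ed _ _; exact: ed.
have memB t : (t \in B) = [forall j in Sj, j \notin t].
  apply/bigcapP/forall_inP => H j jS; have := H j jS; by rewrite !inE.
have memS t : (t \in spanning_trees n) = spanning_tree t by rewrite inE.
case: (boolP (i \in Sj)) => iS.
  have -> : edge_event i :&: B = set0.
    apply/setP => t; rewrite in_setI memB in_set0; apply/negP => /andP [h1 /forall_inP h2].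
    by have := h2 i iS; rewrite inE in h1; rewrite h1.
  rewrite /Pr set0I cards0 mul0r mul0r; apply: divr_ge0; exact: ler0n.
have hF : forall j, j \in Sj -> (u \notin j) && (v \notin j).
  move=> j jS; have := subsetP sub j jS; rewrite !inE => /andP [_].
  rewrite /line_adj => /nandP [/negPn /eqP ij|/negPn /eqP H].
    by move: iS; rewrite ij jS.
  apply/andP; split; apply/negP => hj.
  - have : u \in i :&: j by rewrite inE hj iE set21.
    by rewrite H inE.
  - have : v \in i :&: j by rewrite inE hj iE set22.
    by rewrite H inE.
have hF0 : forall j, j \in (set0 : {set {set 'I_n}}) -> (u \notin j) && (v \notin j).
  by move=> j; rewrite inE.
have k1 := key uv hF.
have k0 := key uv hF0.
have EB : B :&: spanning_trees n = Xs Sj.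
  by apply/setP => t; rewrite in_setI memB memS inXs andbC.
have EAB : edge_event i :&: B :&: spanning_trees n = Zs u v Sj.
  apply/setP => t; rewrite -setIA EB inZs in_setI andbC; congr (_ && _).
  by rewrite iE inE.
have EA : edge_event i :&: spanning_trees n = Zs u v set0.
  apply/setP => t; rewrite inZs inXs in_setI memS.
  have -> : [forall j in (set0 : {set {set 'I_n}}), j \notin t] by apply/forall_inP => j; rewrite inE.
  by rewrite andbT andbC iE inE.
have ES : spanning_trees n = Xs set0.
  apply/setP => t; rewrite inXs memS.
  have -> : [forall j in (set0 : {set {set 'I_n}}), j \notin t] by apply/forall_inP => j; rewrite inE.
  by rewrite andbT.
rewrite /Pr EB EAB EA {1 2 3}ES.
move: PB; rewrite /Pr EB {1}ES.
set a := #|Zs u v Sj|; set b := #|Xs Sj|; set a0 := #|Zs u v set0|; set s := #|Xs set0|.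
move=> PB.
have sne : (s%:R : rat) != 0.
  by apply: contraNneq PB => ->; rewrite invr0 mulr0.
have bne : (b%:R : rat) != 0.
  by apply: contraNneq PB => ->; rewrite mul0r.
have n0 : (0 < n)%N by move: (ltn_ord u); lia.
have Hnat : (a * s = a0 * b)%N.
  apply/eqP; rewrite -(eqn_pmul2l n0); apply/eqP.
  by rewrite mulnA k1 [RHS]mulnA k0 mulnAC.
have -> : (a%:R / s%:R) / (b%:R / s%:R) = (a%:R / b%:R : rat).
  by rewrite invf_div mulrA mulfVK.
rewrite Order.POrderTheory.le_eqVlt; apply/orP; left.
by rewrite eqr_div // -!natrM Hnat.
Qed.
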